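(* Let $m\ge1$ and $n\ge0$, and let $\phi$ be an $r$-simplex of $(\Delta^1)^{m+n}$, viewed as a function $\phi\colon\{1,\dots,m+n\}\to\{1,\dots,r,\pm\infty\}$, which is unmarked in $(\Delta^1)^{\otimes(m+n)}$. Then $\phi$ is marked in $T(\widetilde\square^m)\otimes T(\square^n)=(\Delta^1)^{\otimes m}_e\otimes(\Delta^1)^{\otimes n}$ if and only if: (1) $r\ge m$; (2) $\phi(i)=i$ for all $1\le i\le m$; and (3) there does not exist a sequence $m<i_m<i_{m+1}<\dots<i_r\le m+n$ with $\phi(i_p)=p$ for all $m\le p\le r$.
   Context: An $r$-simplex of the simplicial set $(\Delta^1)^N=N([1]^N)$ is identified with the function $\phi\colon\{1,\dots,N\}\to\{1,\dots,r,\pm\infty\}$ defined by: $\phi(i)=+\infty$ if the $i$-th coordinate of the last vertex is $0$; $\phi(i)=p$ if the $i$-th coordinate of vertex $p-1$ is $0$ and of vertex $p$ is $1$; $\phi(i)=-\infty$ if the $i$-th coordinate of vertex $0$ is $1$ (this is a bijection). Marked simplicial sets have marked simplices of positive dimension containing all degenerate ones. Verity's Gray tensor $X\otimes Y$ has underlying $X\times Y$, with $(x,y)\in X_r\times Y_r$ marked iff for every $0\le i\le r$ the restriction of $x$ to vertices $\{0,\dots,i\}$ is marked or the restriction of $y$ to vertices $\{i,\dots,r\}$ is marked. $(\Delta^1)^{\otimes N}$ is the $N$-fold Gray tensor power of minimally marked $\Delta^1$; in it, an $r$-simplex $\phi$ is unmarked iff there exist $1\le i_1<\dots<i_r\le N$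 with $\phi(i_p)=p$ for all $p$. $(\Delta^1)^{\otimes m}_e$ is $(\Delta^1)^{\otimes m}$ with additionally the $m$-simplex $\iota_m$ (given by $\iota_m(i)=i$) marked. Here $(\Delta^1)^{\otimes m}_e\otimes(\Delta^1)^{\otimes n}$ is identified with a marking on $(\Delta^1)^{m+n}$ via $(\Delta^1)^m\times(\Delta^1)^n=(\Delta^1)^{m+n}$, the first $m$ coordinates coming from the first factor. *)

(* Defs.v *)
From mathcomp Require Import all_boot.
Set Implicit Arguments. Unset Strict Implicit. Unset Printing Implicit Defensive.

(* Conventions: coordinates of (Delta^1)^N are indexed by 1..N (nat);
   vertices of an r-simplex are indexed by 0..r.  A simplex is given by its
   vertices: v p i : bool is the i-th coordinate of vertex p (false = 0, true = 1).
   Values of v outside these ranges are irrelevant (never inspected). *)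
Definition simplex_data := nat -> nat -> bool.

Definition is_simplex (N r : nat) (v : simplex_data) : Prop :=
  forall p i, p < r -> 1 <= i <= N -> v p i <= v p.+1 i.

Inductive ext := Fin of nat | PInf | MInf.

(* phi(i) = +oo if coordinate i of the last vertex is 0; -oo if coordinate i of
   vertex 0 is 1; otherwise the p with coordinate i of vertex p-1 equal 0 and of
   vertex p equal 1, i.e. the number of vertices q in 0..r with coordinate 0. *)
Definition phi_of (r : nat) (v : simplex_data) (i : nat) : ext :=
  if ~~ v r i then PInf
  else if v 0 i then MInf
  else Fin (\sum_(q < r.+1) ~~ v q i).

Definition gray_unmarked (N r : nat) (phi : nat -> ext) : Prop :=
  exists s : nat -> nat,
    (forall p, 1 <= p <= r -> 1 <= s p <= N /\ phi (s p) = Fin p) /\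
    (forall p, 1 <= p < r -> s p < s p.+1).

Definition marked_cube (N r : nat) (v : simplex_data) : Prop :=
  ~ gray_unmarked N r (phi_of r v).

(* Marked r-simplices of (Delta^1)^{(x) m}_e : additionally iota_m marked. *)
Definition marked_cube_e (m r : nat) (v : simplex_data) : Prop :=
  marked_cube m r v \/
  (r = m /\ forall i, 1 <= i <= m -> phi_of r v i = Fin i).

Definition restr_front (i : nat) (v : simplex_data) : simplex_data := v.
Definition restr_back (i : nat) (v : simplex_data) : simplex_data :=
  fun p j => v (p + i) j.

Definition gray_tensor_marked (MX MY : nat -> simplex_data -> Prop)
    (r : nat) (x y : simplex_data) : Prop :=
  forall i, i <= r -> MX i (restr_front i x) \/ MY (r - i) (restr_back i y).

(* Identification (Delta^1)^m x (Delta^1)^n = (Delta^1)^(m+n):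
   first m coordinates from the first factor. *)
Definition first_part (m : nat) (v : simplex_data) : simplex_data := v.
Definition second_part (m : nat) (v : simplex_data) : simplex_data :=
  fun p j => v p (j + m).

(* Main.v *)
Require Import Defs.
From mathcomp Require Import all_boot zify.

Lemma mono_ext (b : nat -> bool) r : (forall q, q < r -> b q <= b q.+1) ->
  forall q1 q2, q1 <= q2 -> q2 <= r -> b q1 -> b q2.
Proof.
move=> H q1; elim=> [|q2 IH] h1 h2.
  by have -> : q1 = 0 by lia.
case: (ltngtP q1 q2.+1) => [lt|gt|->]; [|lia|by []].
move=> b1; have bq := IH ltac:(lia) ltac:(lia) b1.
move: (H q2 ltac:(lia)); rewrite bq; by case: (b q2.+1).
Qed.

Lemma count_trans (b : nat -> bool) r t : (forall q, q < r -> b q <= b q.+1) ->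
  0 < t <= r -> ~~ b t.-1 -> b t -> \sum_(q < r.+1) ~~ b q = t.
Proof.
move=> H ht bt1 bt.
rewrite -(big_mkord xpredT (fun q => nat_of_bool (~~ b q))).
rewrite (big_cat_nat _ (n:=t)) //=; last lia.
rewrite (eq_big_nat _ _ (F2 := fun=> 1)); last first.
  move=> i hi; apply/eqP; rewrite eqb1; apply/negP => bi.
  by move: bt1; rewrite (@mono_ext b r H i t.-1) //; lia.
rewrite (eq_big_nat _ _ (F1 := fun q => nat_of_bool (~~ b q)) (F2 := fun=> 0)); last first.
  by move=> i hi; rewrite (@mono_ext b r H t i) //; lia.
by rewrite !sum_nat_const_nat; lia.
Qed.

Lemma phiE r (b : nat -> bool) p : (forall q, q < r -> b q <= b q.+1) ->
 ((if ~~ b r then PInf else if b 0 then MInf else Fin (\sum_(q < r.+1) ~~ b q)) = Fin p <-> [/\ 0 < p, p <= r, ~~ b p.-1 & b p]).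
Proof.
move=> H; split.
  case br: (b r) => //=; case b0: (b 0) => //=; case=> <-.
  have exP : exists i, b i by exists r.
  case: (ex_minnP exP) => t bt tmin.
  have t0 : 0 < t by case: t bt tmin => //; rewrite b0.
  have tr : t <= r by exact: tmin.
  have bt1 : ~~ b t.-1.
    apply/negP => /tmin; lia.
  by rewrite (@count_trans b r _ H _ bt1 bt) //; lia.
case=> p0 pr bp1 bp.
rewrite (@mono_ext b r H p r) //=.
have -> : b 0 = false.
  apply/negP => b00; have h := @mono_ext b r H 0 p.-1 ltac:(lia) ltac:(lia) b00; move: bp1; rewrite h //; lia.
by rewrite (@count_trans b r _ H _ bp1 bp) //; lia.
Qed.

Lemma phiF r (v : simplex_data) j p : (forall q, q < r -> v q j <= v q.+1 j) ->
  phi_of r v j = Fin p <-> [/\ 0 < p, p <= r, ~~ v p.-1 j & v p j].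
Proof. move=> H; exact: (@phiE r (fun q => v q j) p H). Qed.

Lemma frontE r k (v : simplex_data) j p : (forall q, q < r -> v q j <= v q.+1 j) ->
  k <= r -> 1 <= p <= k -> (phi_of k v j = Fin p <-> phi_of r v j = Fin p).
Proof.
move=> H kr pk.
have Hk : forall q, q < k -> v q j <= v q.+1 j by move=> q qk; apply: H; lia.
rewrite (@phiF _ _ _ _ Hk) (@phiF _ _ _ _ H); split; case=> *; split => //; lia.
Qed.

Lemma backE m r k (v : simplex_data) j q : (forall p, p < r -> v p (j + m) <= v p.+1 (j + m)) ->
  k <= r -> 0 < q ->
  (phi_of (r - k) (restr_back k (second_part m v)) j = Fin q <-> phi_of r v (j + m) = Fin (q + k)).
Proof.
move=> H kr q0.
have Hk : forall p, p < r - k -> restr_back k (second_part m v) p j <= restr_back k (second_part m v) p.+1 j.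
  move=> p pk; rewrite /restr_back /second_part addSn; apply: H; lia.
rewrite (@phiF _ _ _ _ Hk) (@phiF _ _ _ _ H) /restr_back /second_part.
have -> : q.-1 + k = (q + k).-1 by lia.
split; case=> *; split => //; lia.
Qed.

Lemma incr_ge (s : nat -> nat) r : (forall p, 1 <= p < r -> s p < s p.+1) ->
  1 <= s 1 -> forall p, 1 <= p <= r -> p <= s p.
Proof.
move=> H h1; elim=> [|p IH] // hp.
case: (posnP p) => [->//|p0].
have := H p ltac:(lia); have := IH ltac:(lia); lia.
Qed.

Lemma incr_le (s : nat -> nat) a r : (forall p, a < p < r -> s p < s p.+1) ->
  forall p q, a < p -> p <= q -> q <= r -> s p <= s q.
Proof.
move=> H p; elim=> [|q IH] h1 h2 h3; first lia.
case: (ltngtP p q.+1) => [lt|gt|->]; [|lia|by []].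
have := H q ltac:(lia); have := IH ltac:(lia) ltac:(lia) ltac:(lia); lia.
Qed.

Theorem lemma6p5 (m n r : nat) (v : simplex_data) :
  1 <= m ->
  is_simplex (m + n) r v ->
  gray_unmarked (m + n) r (phi_of r v) ->
  (gray_tensor_marked (marked_cube_e m) (marked_cube n) r
      (first_part m v) (second_part m v)
   <->
   [/\ m <= r,
       (forall i, 1 <= i <= m -> phi_of r v i = Fin i) &
       ~ (exists s : nat -> nat,
            (forall p, m <= p <= r -> m < s p <= m + n /\ phi_of r v (s p) = Fin p) /\
            (forall p, m <= p < r -> s p < s p.+1))]).
Proof.
move=> m1 Hs [s [Hs1 Hs2]].
have mono : forall j, 1 <= j <= m + n -> forall q, q < r -> v q j <= v q.+1 j.
  by move=> j hj q hq; apply: Hs.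
have backU : forall k, k <= r ->
   (exists t : nat -> nat, (forall p, k < p <= r -> m < t p <= m + n /\ phi_of r v (t p) = Fin p) /\
            (forall p, k < p < r -> t p < t p.+1)) ->
   ~ marked_cube n (r - k) (restr_back k (second_part m v)).
  move=> k kr [t [Ht1 Ht2]]; apply; exists (fun q => t (q + k) - m); split.
    move=> q hq; have [ht1 ht2] := Ht1 (q + k) ltac:(lia).
    split; first lia.
    have mj : forall p, p < r -> v p (t (q + k) - m + m) <= v p.+1 (t (q + k) - m + m).
      apply: mono; lia.
    apply/(@backE m r k v _ q mj kr) => //; first lia.
    by have -> : t (q + k) - m + m = t (q + k) by lia.
  move=> q hq; have := Ht2 (q + k) ltac:(lia).
  have := Ht1 (q + k) ltac:(lia); have := Ht1 (q.+1 + k) ltac:(lia).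
  rewrite addSn; lia.
have frontU : forall k, k <= r ->
   (exists t : nat -> nat, (forall p, 1 <= p <= k -> 1 <= t p <= m /\ phi_of r v (t p) = Fin p) /\
            (forall p, 1 <= p < k -> t p < t p.+1)) ->
   ~ marked_cube m k (restr_front k (first_part m v)).
  move=> k kr [t [Ht1 Ht2]]; apply; exists t; split => // p hp.
  have [ht1 ht2] := Ht1 p hp; split => //.
  rewrite /restr_front /first_part.
  have mj : forall q, q < r -> v q (t p) <= v q.+1 (t p) by apply: mono; lia.
  by apply/(@frontE r k v _ p mj kr hp).
split.
- move=> HT.
  have exP : exists p, (p <= r) && ((p == 0) || (s p <= m)) by exists 0.
  have ubP : forall p, (p <= r) && ((p == 0) || (s p <= m)) -> p <= r by move=> p /andP[].
  case: (ex_maxnP exP ubP) => a /andP[ar ha] amax.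
  have sle : forall p q, 0 < p -> p <= q -> q <= r -> s p <= s q.
    apply: (@incr_le s 0 r); move=> p hp; apply: Hs2; lia.
  have hi : forall p, a < p <= r -> m < s p.
    move=> p hp; case: (leqP (s p) m) => // spm.
    have := amax p; rewrite spm orbT; move/(_ ltac:(lia)); lia.
  have hlo : forall p, 1 <= p <= a -> s p <= m.
    move=> p hp; case/orP: ha => [/eqP a0|sam]; first lia.
    apply: leq_trans sam; apply: sle; lia.
  have [[|[am Hid]]|] := HT a ar.
  + move=> HF; exfalso; apply: (frontU a ar _ HF); exists s; split.
      move=> p hp; have [h1 h2] := Hs1 p ltac:(lia); split => //.
      have := hlo p hp; lia.
    move=> p hp; apply: Hs2; lia.
  + subst a.
    have Hid' : forall i, 1 <= i <= m -> phi_of r v i = Fin i.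
      move=> i hi'; have mj : forall q, q < r -> v q i <= v q.+1 i by apply: mono; lia.
      apply/(@frontE r m v i i mj ar hi'); exact: Hid.
    split => //.
    move=> [t [Ht1 Ht2]].
    have [[HF|[HF _]]|HB] := HT m.-1 ltac:(lia).
    * apply: (frontU m.-1 ltac:(lia) _ HF); exists id; split.
        move=> p hp; split; first lia; apply: Hid'; lia.
      move=> p hp /=; lia.
    * lia.
    * apply: (backU m.-1 ltac:(lia) _ HB); exists t; split.
        move=> p hp; apply: Ht1; lia.
      move=> p hp; apply: Ht2; lia.
  + move=> HB; exfalso; apply: (backU a ar _ HB); exists s; split.
      move=> p hp; have [h1 h2] := Hs1 p ltac:(lia); split => //.
      have := hi p hp; lia.
    move=> p hp; apply: Hs2; lia.
- case=> mr Hid H3 k kr.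
  case: (ltngtP k m) => [km|mk|->].
  + right => HB; apply: H3.
    case: HB => t [Ht1 Ht2].
    exists (fun p => t (p - k) + m); split.
      move=> p hp; have [h1 h2] := Ht1 (p - k) ltac:(lia); split; first lia.
      have mj : forall q, q < r -> v q (t (p - k) + m) <= v q.+1 (t (p - k) + m) by apply: mono; lia.
      move/(@backE m r k v _ (p - k) mj kr ltac:(lia)): h2.
      by have -> : p - k + k = p by lia.
    move=> p hp /=; have -> : p.+1 - k = (p - k).+1 by lia.
    have := Ht2 (p - k) ltac:(lia); lia.
  + left; left => -[t [Ht1 Ht2]].
    have := @incr_ge t k Ht2 ltac:(have := Ht1 1 ltac:(lia); lia) k ltac:(lia).
    have := Ht1 k ltac:(lia); lia.
  + left; right; split => // i hi.
    rewrite /restr_front /first_part.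
    have mj : forall q, q < r -> v q i <= v q.+1 i by apply: mono; lia.
    apply/(@frontE r m v i i mj mr hi); exact: Hid.
Qed.
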